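(* Let $(X,d)$ be a metric space and let $u,u_1,u_2,\ldots\in F_{USCG}(X)$. Then the following statements are equivalent: (i) $u_n\stackrel{\Gamma}{\longrightarrow}u$; (ii) $[u_n]_\alpha$ Kuratowski converges to $[u]_\alpha$ for almost every $\alpha\in(0,1)$ (with respect to Lebesgue measure); (iii) $[u_n]_\alpha$ Kuratowski converges to $[u]_\alpha$ for all $\alpha\in(0,1)\setminus P(u)$; (iv) there is a dense subset $P$ of $(0,1)\setminus P(u)$ such that $[u_n]_\alpha$ Kuratowski converges to $[u]_\alpha$ for all $\alpha\in P$; (v) there is a countable dense subset $P$ of $(0,1)\setminus P(u)$ such that $[u_n]_\alpha$ Kuratowski converges to $[u]_\alpha$ for all $\alpha\in P$.
   Context: A fuzzy set on $X$ is a function $u:X\to[0,1]$, with $\alpha$-cuts $[u]_\alpha=\{x: u(x)\ge\alpha\}$ for $\alpha\in(0,1]$ and $[u]_0=\overline{\{u>0\}}$. $F_{USC}(X)$ is the set of fuzzy sets with all $\alpha$-cuts ($\alpha\in[0,1]$) non-empty and closed; $F_{USCG}(X)=\{u\in F_{USC}(X): [u]_\alpha\text{ is compact for all }\alpha\in(0,1]\}$. For sets $C_n\subseteq X$: $\liminf_n C_n=\{x: x=\lim_n x_n, x_n\in C_n\}$, $\limsup_n C_n=\{x: x=\lim_j x_{n_j}, x_{n_j}\in C_{n_j}\}$; $C_n$ Kuratowski converges to $C$ if $C=\liminf_n C_n=\limsup_n C_n$. ${\rm end}\,u=\{(x,t)\in X\times[0,1]: u(x)\ge t\}$, with $X\times[0,1]$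 metrized by $\overline{d}((x,\alpha),(y,\beta))=d(x,y)+|\alpha-\beta|$. $u_n\stackrel{\Gamma}{\longrightarrow}u$ means ${\rm end}\,u_n$ Kuratowski converges to ${\rm end}\,u$. A number $\alpha\in(0,1)$ is a platform point of $u$ if $\overline{\{u>\alpha\}}\subsetneqq[u]_\alpha$; $P(u)$ is the set of platform points of $u$. *)

(* Defs.v *)
From HB Require Import structures.
From mathcomp Require Import all_boot all_order all_algebra.
From mathcomp Require Import all_classical all_reals all_analysis.
Set Implicit Arguments. Unset Strict Implicit. Unset Printing Implicit Defensive.
Import Order.TTheory GRing.Theory Num.Theory.
Import numFieldNormedType.Exports.
Local Open Scope classical_set_scope.
Local Open Scope ring_scope.

Section Defs.
Context {R : realType}.

Definition dconv {T : Type} (D : T -> T -> R) (xs : nat -> T) (x : T) : Prop :=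
  (fun n => D (xs n) x) @ \oo --> (0 : R).

Definition kur_liminf {T : Type} (D : T -> T -> R) (C : nat -> set T) : set T :=
  [set x | exists xs : nat -> T, (forall n, C n (xs n)) /\ dconv D xs x].

Definition kur_limsup {T : Type} (D : T -> T -> R) (C : nat -> set T) : set T :=
  [set x | exists (nj : nat -> nat) (xs : nat -> T),
     (forall j, (nj j < nj j.+1)%N) /\ (forall j, C (nj j) (xs j)) /\ dconv D xs x].

Definition kur_conv {T : Type} (D : T -> T -> R) (C : nat -> set T) (A : set T) : Prop :=
  A = kur_liminf D C /\ A = kur_limsup D C.

Context {X : metricType R}.

Definition cut (u : X -> R) (a : R) : set X :=
  if a == 0 then closure [set x | 0 < u x] else [set x | a <= u x].

Definition is_fuzzy (u : X -> R) : Prop := forall x, 0 <= u x <= 1.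

Definition F_USC (u : X -> R) : Prop :=
  is_fuzzy u /\ forall a, 0 <= a <= 1 -> cut u a !=set0 /\ closed (cut u a).

Definition F_USCG (u : X -> R) : Prop :=
  F_USC u /\ forall a, 0 < a <= 1 -> compact (cut u a).

Definition dbar (p q : X * R) : R := mdist p.1 q.1 + `|p.2 - q.2|.

Definition endo (u : X -> R) : set (X * R) :=
  [set p | 0 <= p.2 <= 1 /\ p.2 <= u p.1].

Definition Gamma_conv (us : nat -> X -> R) (u : X -> R) : Prop :=
  kur_conv dbar (fun n => endo (us n)) (endo u).

Definition cut_kconv (us : nat -> X -> R) (u : X -> R) (a : R) : Prop :=
  kur_conv mdist (fun n => cut (us n) a) (cut u a).

Definition platform (u : X -> R) : set R :=
  [set a | 0 < a < 1 /\ closure [set x | a < u x] `<` cut u a].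

End Defs.

Definition nonplat {R : realType} {X : metricType R} (u : X -> R) : set R :=
  [set a : R | 0 < a < 1] `\` platform u.

Definition dense_in {R : realType} (P S : set R) : Prop :=
  P `<=` S /\ forall s, S s -> forall e : R, 0 < e -> exists2 p, P p & `|p - s| < e.

(* Main.v *)
Require Import Defs.
From HB Require Import structures.
From mathcomp Require Import all_boot all_order all_algebra.
From mathcomp Require Import all_classical all_reals all_analysis.
From mathcomp Require Import finmap lra.
Import Order.TTheory GRing.Theory Num.Theory.
Import numFieldNormedType.Exports.
Local Open Scope classical_set_scope.
Local Open Scope ring_scope.

Section Gen.
Context {R : realType}.

Lemma invS_lt {e : R} : 0 < e -> exists k : nat, forall n, (k <= n)%N -> n.+1%:R^-1 < e.
Proof.
move=> e0; have [k hk] := ltr_add_invr e0; rewrite add0r in hk.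
exists k => n kn; apply: le_lt_trans hk.
rewrite lef_pV2 ?posrE ?ltr0n // ler_nat; by [].
Qed.

Context {T : Type} (D : T -> T -> R).

Lemma dconv_ev xs x : dconv D xs x ->
  forall e, 0 < e -> exists N, forall n, (N <= n)%N -> `|D (xs n) x| < e.
Proof.
move=> /cvgrPdist_lt H e e0; have [N _ HN] := H e e0.
exists N => n hn; have := HN n hn; by rewrite sub0r normrN.
Qed.

Lemma ev_dconv xs x :
  (forall e, 0 < e -> exists N, forall n, (N <= n)%N -> `|D (xs n) x| < e) ->
  dconv D xs x.
Proof.
move=> H; apply/cvgrPdist_lt => e e0; have [N HN] := H e e0.
exists N => // n /= hn; rewrite sub0r normrN; exact: HN.
Qed.

Lemma liminf_sub_limsup C : kur_liminf D C `<=` kur_limsup D C.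
Proof. move=> x [xs [H1 H2]]; exists id, xs; split => //. Qed.

Lemma liminf_crit C x : (forall y, 0 <= D y x) -> (forall n, C n !=set0) ->
  (forall e, 0 < e -> exists N, forall n, (N <= n)%N -> exists2 y, C n y & D y x < e) ->
  kur_liminf D C x.
Proof.
move=> D0 Cne H.
have hS n : has_inf [set D y x | y in C n].
  rewrite /has_inf; split; first by have [y Cy] := Cne n; exists (D y x), y.
  by exists 0 => _ [y _ <-].
have /choice [xs Hxs] : forall n, exists y, C n y /\ D y x < inf [set D y x | y in C n] + n.+1%:R^-1.
  move=> n; have pn : 0 < n.+1%:R^-1 :> R by rewrite invr_gt0 ltr0Sn.
  have [_ [y Cy <-] lt] := inf_adherent pn (hS n).
  by exists y; split.
rewrite /kur_liminf /=; exists xs; split; first by move=> n; case: (Hxs n).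
apply: ev_dconv => e e0.
have e20 : 0 < e / 2 by rewrite divr_gt0.
have [N HN] := H _ e20; have [k hk] := invS_lt e20.
exists (maxn N k) => n; rewrite geq_max => /andP [Nn kn].
have [y Cy Dy] := HN n Nn.
have [_ lt] := Hxs n.
rewrite ger0_norm //; apply: (lt_le_trans lt).
rewrite [e]splitr; apply: lerD; last exact/ltW/hk.
apply: le_trans (ltW Dy); apply: ge_inf; first by case: (hS n).
by exists y.
Qed.

Lemma liminf_crit_inv C x : kur_liminf D C x ->
  forall e, 0 < e -> exists N, forall n, (N <= n)%N -> exists2 y, C n y & D y x < e.
Proof.
move=> [xs [H1 H2]] e e0; have [N HN] := @dconv_ev _ _ H2 _ e0.
exists N => n hn; exists (xs n) => //; exact: le_lt_trans (ler_norm _) (HN n hn).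
Qed.

End Gen.
Arguments dconv_ev {R T D xs x}.
Arguments ev_dconv {R T D xs x}.
Arguments liminf_crit_inv {R T D C x}.
Arguments liminf_crit {R T D C x}.

Section PtCov.
Context {R : realType} {X : metricType R}.
Variable x0 : X.
HB.instance Definition _ := isPointed.Build X x0.
Lemma cover_of_compact (A : set X) : compact A -> cover_compact A.
Proof. by rewrite compact_cover. Qed.
End PtCov.

Local Notation cut := Defs.cut.
Section Fz.
Context {R : realType} {X : metricType R}.

Lemma cutP (v : X -> R) a x : 0 < a -> cut v a x <-> a <= v x.
Proof. by move=> a0; rewrite /cut (negbTE (lt0r_neq0 a0)). Qed.

Lemma dbar_ge0 (p q : X * R) : 0 <= dbar p q.
Proof. by rewrite /dbar addr_ge0 // mdist_ge0. Qed.

Variables (u : X -> R) (us : nat -> X -> R).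
Hypothesis Fu : F_USCG u.
Hypothesis Fus : forall n, F_USCG (us n).

Lemma fz {v : X -> R} : F_USCG v -> forall x, 0 <= v x <= 1.
Proof. by move=> [[H _] _]. Qed.

Lemma cut_ne {v : X -> R} : F_USCG v -> forall a, 0 <= a <= 1 -> cut v a !=set0.
Proof. by move=> [[_ H] _] a ha; case: (H a ha). Qed.

Lemma cut_cl {v : X -> R} : F_USCG v -> forall a, 0 <= a <= 1 -> closed (cut v a).
Proof. by move=> [[_ H] _] a ha; case: (H a ha). Qed.

Lemma fwd : Gamma_conv us u -> forall a, nonplat u a -> cut_kconv us u a.
Proof.
move=> [GL GU] a [/= /andP [a0 a1] npl].
have ha : 0 <= a <= 1 by rewrite !ltW.
have sub1 : cut u a `<=` closure [set x | a < u x].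
  move=> x cx; apply: contrapT => ncl; apply: npl; split; first by rewrite a0 a1.
  split.
    move=> y hy; move/closure_id: (cut_cl Fu _ ha) => ->.
    apply: closureS hy => z /= h; rewrite cutP //; exact: ltW.
  by move=> H; apply: ncl; exact: H.
have sub2 : cut u a `<=` kur_liminf mdist (fun n => cut (us n) a).
  move=> x /sub1 clx; apply: liminf_crit.
  - by move=> y; exact: mdist_ge0.
  - by move=> n; exact: cut_ne (Fus n) _ ha.
  move=> e e0; have e2 : 0 < e / 2 by rewrite divr_gt0.
  have [y [ay bxy]] := clx _ (nbhsx_ballx x _ e2).
  move: bxy; rewrite ballEmdist /= => bxy; move: ay => /= ay.
  have ey : endo u (y, u y) by split => //=; rewrite (fz Fu).
  rewrite GL in ey.
  have m0 : 0 < Num.min (e / 2) (u y - a) by rewrite lt_min e2 subr_gt0 ay.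
  have [N HN] := liminf_crit_inv ey _ m0.
  exists N => n /HN [[z s] [/= /andP[s0 s1] szn] dz].
  exists z.
    rewrite cutP //; rewrite /dbar /= lt_min in dz; case/andP: dz => d1 d2.
    have h1 := mdist_ge0 z y.
    have h3 : u y - s <= `|s - u y| by rewrite distrC ler_norm.
    lra.
  rewrite /dbar /= lt_min in dz; case/andP: dz => d1 d2.
  have h1 := metric_triangle z y x.
  have h2 : mdist y x = mdist x y by rewrite metric_sym.
  have h3 := normr_ge0 (s - u y).
  lra.
have sub3 : kur_limsup mdist (fun n => cut (us n) a) `<=` cut u a.
  move=> x [nj [xs [inc [hx dx]]]].
  have : kur_limsup dbar (fun n => endo (us n)) (x, a).
    exists nj, (fun j => (xs j, a)); split => //; split.
      by move=> j; split => //=; rewrite -cutP.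
    apply: ev_dconv => e e0; have [N HN] := dconv_ev dx _ e0.
    by exists N => n hn; rewrite /dbar /= subrr normr0 addr0; exact: HN.
  by rewrite -GU => -[_ /=]; rewrite cutP.
have sub4 := @liminf_sub_limsup R X mdist (fun n => cut (us n) a).
rewrite /cut_kconv /kur_conv; split; apply/seteqP; split => //.
- exact: subset_trans sub4 sub3.
- exact: subset_trans sub2 sub4.
Qed.

Lemma bwd : (forall c d, 0 <= c -> c < d -> d <= 1 ->
    exists p, [/\ c < p, p < d & cut_kconv us u p]) -> Gamma_conv us u.
Proof.
move=> HD.
have s1 : endo u `<=` kur_liminf dbar (fun n => endo (us n)).
  move=> [x t] [/= /andP[t0 t1] tu]; apply: liminf_crit.
  - by move=> q; exact: dbar_ge0.
  - move=> n; exists (x, 0); split => //=; first by rewrite lexx ler01.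
    by case/andP: (fz (Fus n) x).
  move=> e e0; have e2 : 0 < e / 2 by rewrite divr_gt0.
  case: (ltP t (e / 2)) => te.
    exists 0%N => n _; exists (x, 0).
      split => //=; first by rewrite lexx ler01.
      by case/andP: (fz (Fus n) x).
    rewrite /dbar /= mdistxx sub0r normrN ger0_norm // add0r; lra.
  have [p [cp pd [KL KU]]] := HD (t - e / 2) t ltac:(lra) ltac:(lra) t1.
  have p0 : 0 < p by lra.
  have xp : cut u p x by rewrite cutP //; lra.
  rewrite KL in xp; have [N HN] := liminf_crit_inv xp _ e2.
  exists N => n /HN [y yc dy]; exists (y, p).
    split => /=; last by rewrite -cutP.
    by rewrite ltW //=; lra.
  rewrite /dbar /= ltr0_norm; lra.
have s2 : kur_limsup dbar (fun n => endo (us n)) `<=` endo u.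
  move=> [x t] [nj [ps [inc [hp dp]]]].
  have ev := dconv_ev dp.
  have key : forall N, 0 <= (ps N).2 <= 1 /\ (ps N).2 <= us (nj N) (ps N).1 by move=> N; exact: hp N.
  have t0 : 0 <= t.
    rewrite leNgt; apply/negP => tn; have [N HN] := ev (- t) ltac:(lra).
    have := HN N (leqnn N); have [/andP [k1 k2] k3] := key N.
    rewrite ger0_norm ?dbar_ge0 // /dbar /=.
    have h1 := mdist_ge0 (ps N).1 x; have h2 := ler_norm ((ps N).2 - t); lra.
  have t1 : t <= 1.
    rewrite leNgt; apply/negP => tn; have [N HN] := ev (t - 1) ltac:(lra).
    have := HN N (leqnn N); have [/andP [k1 k2] k3] := key N.
    rewrite ger0_norm ?dbar_ge0 // /dbar /=.
    have h1 := mdist_ge0 (ps N).1 x.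
    have h2 : t - (ps N).2 <= `|(ps N).2 - t| by rewrite distrC ler_norm.
    lra.
  split => /=; first by rewrite t0 t1.
  rewrite leNgt; apply/negP => ut.
  have ux0 : 0 <= u x by case/andP: (fz Fu x).
  have [p [cp pt [KL KU]]] := HD (u x) t ux0 ut t1.
  have [J HJ] := ev (t - p) ltac:(lra).
  have : kur_limsup mdist (fun n => cut (us n) p) x.
    exists (fun j => nj (j + J)%N), (fun j => (ps (j + J)%N).1); split; [|split].
    - by move=> j /=; rewrite addSn; exact: inc.
    - move=> j; have := HJ (j + J)%N (leq_addl _ _); have [/andP [k1 k2] k3] := key (j + J)%N.
      rewrite cutP; last by lra.
      rewrite ger0_norm ?dbar_ge0 // /dbar /=.
      have h1 := mdist_ge0 (ps (j + J)%N).1 x.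
      have h2 : t - (ps (j + J)%N).2 <= `|(ps (j + J)%N).2 - t| by rewrite distrC ler_norm.
      lra.
    - apply: ev_dconv => e e0; have [N HN] := ev e e0; exists N => n hn.
      have := HN (n + J)%N (leq_trans hn (leq_addr _ _)).
      rewrite !ger0_norm ?dbar_ge0 ?mdist_ge0 // /dbar /=.
      have h2 := normr_ge0 ((ps (n + J)%N).2 - t); lra.
  rewrite -KU cutP; lra.
have s3 := @liminf_sub_limsup R _ dbar (fun n => endo (us n)).
rewrite /Gamma_conv /kur_conv; split; apply/seteqP; split => //.
- exact: subset_trans s3 s2.
- exact: subset_trans s1 s3.
Qed.

Lemma plat_countable : countable (platform u).
Proof.
pose r (k : nat) : R := k.+1%:R^-1.
have r0 k : 0 < r k by rewrite /r invr_gt0 ltr0Sn.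
have [x0 _] := cut_ne Fu 1 ltac:(by rewrite ler01 lexx).
pose K (n : nat) := cut u (r n).
have /choice [F HF] : forall nk : nat * nat, exists F : {fset X},
    {subset F <= K nk.1} /\ K nk.1 `<=` cover [set` F] (fun d => (ball d (r nk.2))°).
  move=> [n k] /=.
  have cK : compact (K n) by apply: Fu.2; rewrite r0 /r invf_le1 ?ltr0Sn // ler1n.
  move: (cover_of_compact x0 _ cK) => /(_ X (K n) (fun d => (ball d (r k))°)).
  case.
  - by move=> i _; exact: open_interior.
  - by move=> x Kx; exists x => //; exact: nbhsx_ballx.
  by move=> D' sD' cD'; exists D'; split.
pose S := \bigcup_(nk in [set: nat * nat]) [set` F nk].
have cS : countable S.
  apply: bigcup_countable; first exact: countableP.
  by move=> nk _; apply: finite_set_countable; exact: finite_fset.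
have Q : forall a, platform u a -> exists kd : nat * X, [/\ S kd.2,
   (exists2 y, ball kd.2 (r kd.1) y & a <= u y) &
   (forall y, ball kd.2 (r kd.1) y -> u y <= a)].
  move=> a [/andP [a0 a1] [_ ncut]].
  have [x cx nclx] : exists2 x, cut u a x & ~ closure [set x | a < u x] x.
    apply: contrapT => H; apply: ncut => x cx; apply: contrapT => ncl.
    by apply: H; exists x.
  have [B nB AB] : exists2 B, nbhs x B & ~ ([set x | a < u x] `&` B !=set0).
    apply: contrapT => H; apply: nclx => B nB; apply: contrapT => H'.
    by apply: H; exists B.
  move/nbhs_ballP: nB => [e e0 eB].
  have [n hn] := invS_lt a0.
  have e2 : 0 < e / 2 by rewrite divr_gt0.
  have [k hk] := invS_lt e2.
  have xK : K n x.
    rewrite /K cutP //; move: cx; rewrite cutP // => cx.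
    exact: le_trans (ltW (hn n (leqnn n))) cx.
  have [_ /(_ x xK) [d Fd dx]] := HF (n, k).
  have dx' : ball d (r k) x := interior_subset dx.
  exists (k, d); split => /=.
  - by exists (n, k).
  - by exists x => //; rewrite -cutP.
  move=> y dy; rewrite leNgt; apply/negP => ay; apply: AB; exists y; split => //.
  apply: eB; move: dx' dy; rewrite !ballEmdist /= => dx' dy.
  have h1 := metric_triangle x d y; have h2 : mdist x d = mdist d x by rewrite metric_sym.
  have h3 := hk k (leqnn k); rewrite /r in dx' dy; move: h3 dx' dy; set q := k.+1%:R^-1 => h3 dx' dy; lra.
have /choice [g Hg] : forall a, exists kd : nat * X, platform u a -> [/\ S kd.2,
   (exists2 y, ball kd.2 (r kd.1) y & a <= u y) &
   (forall y, ball kd.2 (r kd.1) y -> u y <= a)].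
  move=> a; case: (pselect (platform u a)) => pa.
    by have [kd H] := Q a pa; exists kd.
  by exists (0%N, x0) => /pa.
have [h hinj] := countable_injP _ cS.
apply/countable_injP; exists (fun a => choice.pickle ((g a).1, h (g a).2)).
move=> a b pa pb /(pcan_inj choice.pickleK) [e1 e2].
move: pa pb => /set_mem pa /set_mem pb.
have [Sa [ya yaB ay] Ba] := Hg a pa; have [Sb [yb ybB byb] Bb] := Hg b pb.
have e3 : (g a).2 = (g b).2 by apply: hinj => //; exact/mem_set.
apply/eqP; rewrite eq_le; apply/andP; split.
- apply: le_trans ay _; apply: Bb; by rewrite -e1 -e3.
- apply: le_trans byb _; apply: Ba; by rewrite e1 e3.
Qed.

End Fz.

Section Meas.
Context {R : realType}.

Lemma countable_neg (A : set R) : countable A -> (@lebesgue_measure R).-negligible A.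
Proof.
move=> cA; exists A; split => //.
- apply: countable_measurable => // t; exact: measurable_set1.
- exact: countable_lebesgue_measure0.
Qed.

Lemma neg_avoid (N : set R) c d : (@lebesgue_measure R).-negligible N -> c < d ->
  exists p, [/\ c < p, p < d & ~ N p].
Proof.
move=> [A [mA A0 NA]] cd; apply: contrapT => H.
have sub : [set` `]c, d[] `<=` A.
  move=> p /=; rewrite in_itv /= => /andP [h1 h2]; apply: NA; apply: contrapT => np.
  by apply: H; exists p; split.
have := le_measure lebesgue_measure (_ : [set` `]c, d[] \in measurable) (_ : A \in measurable) sub.
move=> /(_ (mem_set (measurable_itv _)) (mem_set mA)).
move=> H2; have : (lebesgue_measure [set` `]c, d[] <= 0)%E.
  apply: (le_trans H2); rewrite le_eqVlt; apply/orP; left; apply/eqP; exact: A0.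
rewrite lebesgue_measure_itv /= lte_fin cd /= -EFinD lee_fin subr_le0 leNgt cd //.
Qed.

Lemma cdense (S : set R) : exists P, countable P /\ dense_in P S.
Proof.
pose r (m : nat) : R := m.+1%:R^-1.
pose I := [set i : rat * nat | exists2 s, S s & `|s - ratr i.1| < r i.2].
have /choice [g Hg] : forall i : rat * nat, exists y, I i -> S y /\ `|y - ratr i.1| < r i.2.
  move=> i; case: (pselect (I i)) => Ii; last by exists 0 => /Ii.
  by case: Ii => s Ss hs; exists s.
exists (g @` I); split.
  apply: card_le_trans (card_image_le g I) _; exact: countableP.
split.
  by move=> _ [i Ii <-]; case: (Hg i Ii).
move=> s Ss e e0.
have e2 : 0 < e / 2 by rewrite divr_gt0.
have [m hm] := invS_lt e2.
have rm : 0 < r m by rewrite /r invr_gt0 ltr0Sn.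
have sr : s - r m < s + r m by lra.
have [q] := rat_in_itvoo sr.
  rewrite in_itv /= => /andP [q1 q2].
  have Ii : I (q, m) by exists s => //=; rewrite ltr_distlC q1 q2.
  exists (g (q, m)); first by exists (q, m).
  have [_ h] := Hg _ Ii; move: h; rewrite /= ltr_distlC => /andP [h1 h2].
  have h3 := hm m (leqnn m); move: h3 h1 h2 q1 q2 rm; rewrite /r.
  set z := m.+1%:R^-1 => h3 h1 h2 q1 q2 rm.
  rewrite ltr_distlC; apply/andP; split; lra.
Qed.

End Meas.

Theorem theorem3p7 (R : realType) (X : metricType R)
    (u : X -> R) (us : nat -> X -> R) :
  F_USCG u -> (forall n, F_USCG (us n)) ->
  [/\ Gamma_conv us u <->
        (@lebesgue_measure R).-negligible
          [set a : R | 0 < a < 1 /\ ~ cut_kconv us u a],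
      Gamma_conv us u <-> (forall a, nonplat u a -> cut_kconv us u a),
      Gamma_conv us u <->
        (exists P : set R, dense_in P (nonplat u) /\
           forall a, P a -> cut_kconv us u a)
    & Gamma_conv us u <->
        (exists P : set R, countable P /\ dense_in P (nonplat u) /\
           forall a, P a -> cut_kconv us u a)].
Proof.
move=> Fu Fus.
have F := fwd _ _ Fu Fus.
have B := bwd _ _ Fu Fus.
have PN := countable_neg _ (plat_countable _ Fu).
have NP : forall c d, 0 <= c -> c < d -> d <= 1 ->
    exists p, [/\ c < p, p < d & nonplat u p].
  move=> c d c0 cd d1; have [p [cp pd np]] := neg_avoid _ _ _ PN cd.
  exists p; split => //; split => //=; apply/andP; split; lra.
have dense_bwd : forall P, dense_in P (nonplat u) ->
    (forall a, P a -> cut_kconv us u a) -> Gamma_conv us u.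
  move=> P [PS Pd] HP; apply: B => c d c0 cd d1.
  have [q [cq qd nq]] := NP c d c0 cd d1.
  have m0 : 0 < Num.min (q - c) (d - q) by rewrite lt_min !subr_gt0 cq qd.
  have [p Pp hp] := Pd q nq _ m0.
  have h1 : Num.min (q - c) (d - q) <= q - c by rewrite ge_min lexx.
  have h2 : Num.min (q - c) (d - q) <= d - q by rewrite ge_min lexx orbT.
  move: hp; rewrite ltr_distlC => /andP [h3 h4].
  exists p; split => //; [lra | lra | exact: HP].
split.
- split.
  + move=> G; apply: negligibleS PN => a [/andP [a0 a1] nK].
    apply: contrapT => npa; apply: nK; apply: F => //; split => //=.
    by rewrite a0 a1.
  + move=> NB; apply: B => c d c0 cd d1.
    have [p [cp pd np]] := neg_avoid _ _ _ NB cd; exists p; split => //.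
    apply: contrapT => nK; apply: np; split => //; apply/andP; split; lra.
- split; first exact: F.
  move=> H; apply: B => c d c0 cd d1.
  have [p [cp pd np]] := NP c d c0 cd d1; exists p; split => //; exact: H.
- split.
  + move=> G; exists (nonplat u); split; last exact: F G.
    split => // s Ss e e0; exists s => //; by rewrite subrr normr0.
  + by move=> [P [dP HP]]; exact: dense_bwd dP HP.
- split.
  + move=> G; have [P [cP [PS Pd]]] := cdense (nonplat u).
    exists P; split => //; split => //; move=> a Pa; exact: F G a (PS a Pa).
  + by move=> [P [_ [dP HP]]]; exact: dense_bwd dP HP.
Qed.
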